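(* Let $\phi$ be a partial flow on a metric space $X$, let $\Lambda$ be an isolated set of $\phi$, and let $N$ be an isolating neighborhood of $\Lambda$. Then there is a $\phi$-convex open set $U$ with $\Lambda\subset U\subset N$.
   Context: A partial flow on a metric space $X$ is a continuous map $\phi\colon\Gamma\to X$, $\Gamma\subset\mathbb{R}\times X$ open. Here $\Gamma_x=\{t:(t,x)\in\Gamma\}$ is a connected set containing $0$, $\Gamma_{\phi_t(x)}=\Gamma_x-t$, $\phi_0=\mathrm{id}$, and $\phi_s\phi_t(x)=\phi_{s+t}(x)$ whenever $s,t,s+t\in\Gamma_x$. A $\phi$-invariant set $\Lambda$ (one with $\phi_t(x)\in\Lambda$ for $x\in\Lambda$, $t\in\Gamma_x$) is isolated if there is a compact neighborhood $N$ of $\Lambda$ (an isolating neighborhood) such that $\phi_{\Gamma_x}(x)\subseteq N$ implies $x\in\Lambda$. An open set $U$ is $\phi$-convex if, whenever $t\ge0$, $x\in U$, $\phi_t(x)\in U$ and $\phi_{[0,t]}(x)\subset\overline U$, we have $\phi_{[0,t]}(x)\subset U$. *)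

(* Defs.v *)
From Stdlib Require Import Reals List.
Open Scope R_scope.

Record MetricSpace := {
  carrier :> Type;
  dist : carrier -> carrier -> R;
  dist_nonneg : forall x y, 0 <= dist x y;
  dist_refl : forall x, dist x x = 0;
  dist_sep : forall x y, dist x y = 0 -> x = y;
  dist_sym : forall x y, dist x y = dist y x;
  dist_tri : forall x y z, dist x z <= dist x y + dist y z
}.

Section Defs.
Variable X : MetricSpace.

Definition is_open (U : X -> Prop) : Prop :=
  forall x, U x -> exists eps, 0 < eps /\ forall y, dist X x y < eps -> U y.

Definition is_open_RX (G : R -> X -> Prop) : Prop :=
  forall t x, G t x -> exists eps, 0 < eps /\
    forall s y, Rabs (s - t) < eps -> dist X x y < eps -> G s y.

Definition closure (U : X -> Prop) (x : X) : Prop :=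
  forall eps, 0 < eps -> exists y, U y /\ dist X x y < eps.

Definition compact (K : X -> Prop) : Prop :=
  forall (I : Type) (V : I -> X -> Prop),
    (forall i, is_open (V i)) ->
    (forall x, K x -> exists i, V i x) ->
    exists l : list I, forall x, K x -> exists i, In i l /\ V i x.

Definition neighborhood (N A : X -> Prop) : Prop :=
  forall x, A x -> exists eps, 0 < eps /\ forall y, dist X x y < eps -> N y.

(* A partial flow: domain G (G t x means (t,x) in Gamma), map phi t x,
   meaningful only on G. *)
Record partial_flow (G : R -> X -> Prop) (phi : R -> X -> X) : Prop := {
  pf_open : is_open_RX G;
  pf_cont : forall t x, G t x -> forall eps, 0 < eps -> exists delta, 0 < delta /\
      forall s y, G s y -> Rabs (s - t) < delta -> dist X x y < delta ->
        dist X (phi t x) (phi s y) < eps;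
  pf_zero : forall x, G 0 x;
  pf_conn : forall x a b c, G a x -> G b x -> a <= c <= b -> G c x;
  pf_shift : forall t x, G t x -> forall s, G s (phi t x) <-> G (s + t) x;
  pf_id : forall x, phi 0 x = x;
  pf_comp : forall s t x, G s x -> G t x -> G (s + t) x ->
      phi s (phi t x) = phi (s + t) x
}.

Definition invariant (G : R -> X -> Prop) (phi : R -> X -> X) (L : X -> Prop) :=
  forall x, L x -> forall t, G t x -> L (phi t x).

Definition isolating_neighborhood (G : R -> X -> Prop) (phi : R -> X -> X)
    (L N : X -> Prop) : Prop :=
  compact N /\ neighborhood N L /\
  forall x, (forall t, G t x -> N (phi t x)) -> L x.

Definition isolated (G : R -> X -> Prop) (phi : R -> X -> X) (L : X -> Prop) :=
  invariant G phi L /\ exists N, isolating_neighborhood G phi L N.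

Definition phi_convex (G : R -> X -> Prop) (phi : R -> X -> X) (U : X -> Prop) :=
  forall t x, 0 <= t -> G t x -> U x -> U (phi t x) ->
    (forall s, 0 <= s <= t -> closure U (phi s x)) ->
    forall s, 0 <= s <= t -> U (phi s x).

End Defs.

(* Main.v *)
Require Import Defs.
From Stdlib Require Import Reals List Lra Lia Classical.
Open Scope R_scope.
Import Defs.

Definition Wint (X : MetricSpace) (N : X -> Prop) : X -> Prop :=
  fun y => exists eps, 0 < eps /\ forall y', dist X y y' < eps -> N y'.

Lemma Wint_sub X N y : Wint X N y -> N y.
Proof. intros [e [he H]]. apply H. rewrite dist_refl; lra. Qed.

Lemma closure_mono (X : MetricSpace) (A B : X -> Prop) : (forall y, A y -> B y) ->
  forall y, closure X A y -> closure X B y.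
Proof. intros H y Hc e he. destruct (Hc e he) as [z [Az Dz]]. exists z; auto. Qed.

Lemma list_max_nat {A} (f : A -> option nat) (l : list A) :
  exists M, forall a n, In a l -> f a = Some n -> (n <= M)%nat.
Proof.
  induction l as [|a l [M HM]].
  - exists 0%nat. intros a n [].
  - destruct (f a) as [k|] eqn:E.
    + exists (Nat.max k M). intros b n [<-|Hb] Hf.
      * rewrite E in Hf; injection Hf as <-. apply Nat.le_max_l.
      * specialize (HM b n Hb Hf). lia.
    + exists M. intros b n [<-|Hb] Hf. rewrite E in Hf; discriminate. eauto.
Qed.

Lemma list_min_pos {A} (f : A -> R) (l : list A) :
  exists e, 0 < e /\ forall a, In a l -> 0 < f a -> e <= f a.
Proof.
  induction l as [|a l [e [he H]]].
  - exists 1; split; [lra| intros a []].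
  - destruct (Rlt_dec 0 (f a)).
    + exists (Rmin e (f a)); split. apply Rmin_pos; lra.
      intros b [<-|Hb] Hp. apply Rmin_r. eapply Rle_trans. apply Rmin_l. auto.
    + exists e; split; auto. intros b [<-|Hb] Hp. contradiction. auto.
Qed.

Lemma compact_closed (X : MetricSpace) (N : X -> Prop) : compact X N -> forall x, closure X N x -> N x.
Proof.
  intros HK x Hc. apply NNPP; intro Hx.
  destruct (HK nat (fun k y => / INR (S k) < dist X x y)) as [l Hl].
  - intros k y Hy. exists (dist X x y - / INR (S k)). split. lra.
    intros y' Hy'. pose proof (dist_tri X x y' y). pose proof (dist_sym X y' y). lra.
  - intros y Ny. assert (0 < dist X x y).
    { destruct (dist_nonneg X x y) as [h|h]; auto.
      symmetry in h. apply dist_sep in h. subst; contradiction. }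
    destruct (archimed_cor1 _ H) as [k [Hk Hk0]]. destruct k. lia.
    exists k. auto.
  - destruct (list_max_nat (fun k => Some k) l) as [M HM].
    assert (hp : 0 < / INR (S M)). { apply Rinv_0_lt_compat, lt_0_INR; lia. }
    destruct (Hc _ hp) as [y [Ny Dy]].
    destruct (Hl y Ny) as [k [Ik Vk]].
    specialize (HM k k Ik eq_refl).
    assert (/ INR (S M) <= / INR (S k)).
    { apply Rinv_le_contravar. apply lt_0_INR; lia. apply le_INR; lia. }
    lra.
Qed.

Lemma tube (X : MetricSpace) (x : X) (Gd : R -> X -> Prop) a b : a <= b ->
 (forall r, a <= r <= b -> exists d, 0 < d /\ forall s y, Rabs (s - r) < d -> dist X x y < d -> Gd s y) ->
 exists e, 0 < e /\ forall y, dist X x y < e -> forall r, a <= r <= b -> Gd r y.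
Proof.
  intros hab Hl.
  set (C := fun c => exists e, 0 < e /\ forall y, dist X x y < e -> forall r, a <= r <= c -> Gd r y).
  set (E := fun c => a <= c <= b /\ C c).
  assert (Ea : E a).
  { split. lra. destruct (Hl a ltac:(lra)) as [d [hd Hd]]. exists d; split; auto.
    intros y hy r hr. apply Hd; auto. replace (r - a) with 0 by lra. rewrite Rabs_R0; lra. }
  assert (Eb : bound E). { exists b. intros c [hc _]. lra. }
  destruct (completeness E Eb (ex_intro _ a Ea)) as [m [Hub Hlub]].
  assert (am : a <= m) by (apply Hub; auto).
  assert (mb : m <= b). { apply Hlub. intros c [hc _]. lra. }
  destruct (Hl m ltac:(lra)) as [d [hd Hd]].
  assert (exists c, E c /\ m - d < c).
  { apply NNPP; intro Hn. assert (m <= m - d).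
    { apply Hlub. intros c Ec. apply Rnot_lt_le. intro hc. apply Hn. eauto. }
    lra. }
  destruct H as [c [[hc [e [he He]]] hcm]].
  set (c' := Rmin b (m + d/2)).
  assert (Cc' : C c').
  { exists (Rmin e d). split. apply Rmin_pos; lra. intros y hy r hr.
    destruct (Rle_dec r c). apply He. eapply Rlt_le_trans. apply hy. apply Rmin_l. lra.
    apply Hd. assert (c' <= m + d/2) by apply Rmin_r. apply Rabs_def1; lra.
    eapply Rlt_le_trans. apply hy. apply Rmin_r. }
  assert (c'b : c' <= b) by apply Rmin_l.
  assert (c' <= m). { apply Hub. split; [split|exact Cc']; auto. unfold c'. apply Rmin_glb; lra. }
  assert (c' = b). { unfold c' in *. destruct (Rle_dec b (m + d/2)).
    rewrite Rmin_left; lra. rewrite Rmin_right in H; lra. }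
  rewrite H0 in Cc'. exact Cc'.
Qed.

Lemma nat_unbounded (x : R) : exists n : nat, x <= INR n.
Proof.
  assert (h : 0 < / (Rabs x + 1)). { apply Rinv_0_lt_compat. pose proof (Rabs_pos x). lra. }
  destruct (archimed_cor1 _ h) as [n [Hn Hn0]]. exists n.
  assert (0 < INR n) by (apply lt_0_INR; lia).
  assert (Rabs x + 1 < INR n).
  { rewrite <- (Rinv_inv (INR n)), <- (Rinv_inv (Rabs x + 1)).
    apply Rinv_lt_contravar; auto. apply Rmult_lt_0_compat; auto.
    apply Rinv_0_lt_compat; auto. }
  pose proof (Rle_abs x). lra.
Qed.

Lemma unif_dom (X : MetricSpace) G phi (N : X -> Prop) : partial_flow X G phi -> compact X N ->
  exists e, 0 < e /\ forall y, N y -> forall s, Rabs s < e -> G s y.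
Proof.
  intros pf HK.
  destruct (HK (X * R)%type (fun p y => 0 < snd p /\
     (forall s y', Rabs s < snd p -> dist X (fst p) y' < snd p -> G s y') /\
     dist X (fst p) y < snd p / 2)) as [l Hl].
  - intros [z e] y [he [Hz hy]]; simpl in *.
    exists (e/2 - dist X z y). split. lra.
    intros y' hy'. split; auto. split; auto. simpl.
    pose proof (dist_tri X z y y'). lra.
  - intros y Ny. destruct (pf_open _ _ _ pf 0 y (pf_zero _ _ _ pf y)) as [e [he He]].
    exists (y, e). simpl. split; auto. split.
    + intros s y' hs hy'. apply He; auto. rewrite Rminus_0_r; auto.
    + rewrite dist_refl; lra.
  - destruct (list_min_pos (fun p : X * R => snd p / 2) l) as [e [he He]].
    exists e. split; auto. intros y Ny s hs.
    destruct (Hl y Ny) as [[z r] [Hin [hr [Hz hy]]]]. simpl in *.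
    specialize (He _ Hin ltac:(simpl; lra)). simpl in He.
    apply Hz. lra. lra.
Qed.

Lemma full_dom (X : MetricSpace) G phi (N : X -> Prop) : partial_flow X G phi -> compact X N ->
  forall x, (forall r, G r x -> N (phi r x)) -> forall t, G t x.
Proof.
  intros pf HK x Hx t.
  destruct (unif_dom X G phi N pf HK) as [e [he He]].
  assert (Hk : forall k : nat, G (INR k * (e/2)) x /\ G (- (INR k * (e/2))) x).
  { induction k as [|k [IH1 IH2]].
    - simpl. rewrite Rmult_0_l, Ropp_0. split; apply (pf_zero _ _ _ pf).
    - rewrite S_INR. split.
      + replace ((INR k + 1) * (e/2)) with (e/2 + INR k * (e/2)) by ring.
        apply (pf_shift _ _ _ pf _ _ IH1). apply He. apply Hx; auto.
        rewrite Rabs_right; lra.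
      + replace (- ((INR k + 1) * (e/2))) with (- (e/2) + - (INR k * (e/2))) by ring.
        apply (pf_shift _ _ _ pf _ _ IH2). apply He. apply Hx; auto.
        rewrite Rabs_left; lra. }
  destruct (nat_unbounded (Rabs t / (e/2))) as [k hk].
  destruct (Hk k) as [H1 H2].
  assert (Rabs t <= INR k * (e/2)).
  { apply (Rmult_le_compat_r (e/2)) in hk; [|lra].
    unfold Rdiv in hk. rewrite Rmult_assoc, Rinv_l in hk; lra. }
  apply (pf_conn _ _ _ pf x _ _ _ H2 H1).
  pose proof (Rle_abs t). pose proof (Rle_abs (-t)). rewrite Rabs_Ropp in *. lra.
Qed.

Definition UT (X : MetricSpace) G phi (N : X -> Prop) (T : R) : X -> Prop :=
  fun x => forall r, -T <= r <= T -> G r x /\ Wint X N (phi r x).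

Lemma UT_open (X : MetricSpace) G phi N T : partial_flow X G phi -> 0 <= T ->
  is_open X (UT X G phi N T).
Proof.
  intros pf hT x Hx.
  destruct (tube X x (fun s y => G s y /\ Wint X N (phi s y)) (-T) T ltac:(lra)) as [e [he He]].
  2: { exists e. split; [exact he|]. intros y hy r hr. apply He; auto. }
  - intros r hr. destruct (Hx r hr) as [Gr [rho [hrho Hrho]]].
    destruct (pf_open _ _ _ pf r x Gr) as [e1 [he1 He1]].
    destruct (pf_cont _ _ _ pf r x Gr (rho/2) ltac:(lra)) as [d [hd Hd]].
    exists (Rmin e1 d). split. apply Rmin_pos; auto.
    intros s y hs hy.
    assert (Gs : G s y).
    { apply He1. eapply Rlt_le_trans; [apply hs|apply Rmin_l].
      eapply Rlt_le_trans; [apply hy|apply Rmin_l]. }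
    split; auto.
    assert (hc : dist X (phi r x) (phi s y) < rho/2).
    { apply Hd; auto. eapply Rlt_le_trans; [apply hs|apply Rmin_r].
      eapply Rlt_le_trans; [apply hy|apply Rmin_r]. }
    exists (rho/2). split. lra. intros y' hy'. apply Hrho.
    pose proof (dist_tri X (phi r x) (phi s y) y'). lra.

Qed.

Lemma UT_mono (X : MetricSpace) G phi N T1 T2 : T1 <= T2 ->
  forall x, UT X G phi N T2 x -> UT X G phi N T1 x.
Proof. intros h x H r hr. apply H. lra. Qed.

Lemma ncl_open (X : MetricSpace) (A : X -> Prop) : is_open X (fun y => ~ closure X A y).
Proof.
  intros y Hy. apply not_all_ex_not in Hy. destruct Hy as [e He].
  apply imply_to_and in He. destruct He as [he He].
  exists (e/2). split. lra. intros y' hy' Hc.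
  destruct (Hc (e/2) ltac:(lra)) as [z [Az Dz]]. apply He. exists z. split; auto.
  pose proof (dist_tri X y y' z). lra.
Qed.

Lemma key (X : MetricSpace) G phi (L N : X -> Prop) : partial_flow X G phi ->
  isolating_neighborhood X G phi L N ->
  exists m : nat, forall z, closure X (UT X G phi N (INR m)) z -> Wint X N z.
Proof.
  intros pf [HK [Hnb Hiso]].
  assert (Hall : forall z, (forall n : nat, closure X (UT X G phi N (INR n)) z) -> Wint X N z).
  { intros z Hz. apply Hnb. apply Hiso. intros r Gr.
    apply (compact_closed X N HK). intros eps heps.
    destruct (pf_cont _ _ _ pf r z Gr eps heps) as [d [hd Hd]].
    destruct (nat_unbounded (Rabs r)) as [n hn].
    destruct (Hz n d hd) as [y [Uy Dy]].
    assert (hr : - INR n <= r <= INR n).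
    { pose proof (Rle_abs r). pose proof (Rle_abs (-r)). rewrite Rabs_Ropp in *. lra. }
    destruct (Uy r hr) as [Gy Wy]. exists (phi r y). split.
    apply Wint_sub; auto. apply Hd; auto. rewrite Rminus_diag, Rabs_R0; auto. }
  destruct (HK (option nat) (fun i y => match i with None => Wint X N y
         | Some n => ~ closure X (UT X G phi N (INR n)) y end)) as [l Hl].
  - intros [n|]. apply ncl_open.
    intros y [e [he He]]. exists (e/2). split. lra. intros y' hy'.
    exists (e/2). split. lra. intros y'' hy''. apply He.
    pose proof (dist_tri X y y' y''). lra.
  - intros y Ny. destruct (classic (Wint X N y)) as [W|nW]. exists None; auto.
    destruct (classic (exists n : nat, ~ closure X (UT X G phi N (INR n)) y)) as [[n Hn]|Hn].
    exists (Some n); auto.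
    exfalso. apply nW, Hall. intro n. apply NNPP. intro h. apply Hn. eauto.
  - destruct (list_max_nat (fun i : option nat => i) l) as [M HM].
    exists M. intros z Hz.
    assert (Nz : N z).
    { apply (compact_closed X N HK). revert Hz. apply closure_mono.
      intros y Uy. pose proof (pos_INR M). destruct (Uy 0 ltac:(lra)) as [_ W0].
      rewrite (pf_id _ _ _ pf) in W0. apply Wint_sub; exact W0. }
    destruct (Hl z Nz) as [[n|] [Hin Hv]]; auto.
    exfalso. apply Hv. revert Hz. apply closure_mono. apply UT_mono.
    apply le_INR. apply (HM _ n Hin eq_refl).
Qed.

Lemma UT_convex (X : MetricSpace) G phi N T : partial_flow X G phi -> 0 <= T ->
  (forall z, closure X (UT X G phi N T) z -> Wint X N z) ->
  phi_convex X G phi (UT X G phi N T).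
Proof.
  intros pf hT Hk t x ht Gt Ux Ut Hcl s hs r hr.
  assert (G1 : G (-T) x) by (apply (Ux (-T)); lra).
  assert (G2 : G (T + t) x).
  { apply (pf_shift _ _ _ pf t x Gt T). apply (Ut T); lra. }
  assert (Grs : G (r + s) x) by (apply (pf_conn _ _ _ pf x _ _ _ G1 G2); lra).
  assert (Gs : G s x) by (apply (pf_conn _ _ _ pf x _ _ _ (pf_zero _ _ _ pf x) Gt); lra).
  assert (Gr : G r x) by (apply (Ux r); lra).
  split. apply (pf_shift _ _ _ pf s x Gs r); exact Grs.
  rewrite (pf_comp _ _ _ pf r s x Gr Gs Grs).
  destruct (Rle_dec (r + s) T).
  - apply (Ux (r + s)); lra.
  - destruct (Rle_dec (t - T) (r + s)).
    + set (u := r + s - t).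
      assert (Gu : G u x) by (apply (Ux u); unfold u; lra).
      assert (Gut : G (u + t) x) by (unfold u; replace (r + s - t + t) with (r + s) by ring; exact Grs).
      destruct (Ut u ltac:(unfold u; lra)) as [_ W].
      rewrite (pf_comp _ _ _ pf u t x Gu Gt Gut) in W.
      unfold u in W. replace (r + s - t + t) with (r + s) in W by ring. exact W.
    + apply Hk. apply Hcl. lra.
Qed.

Theorem mainTheorem3 (X : MetricSpace) (G : R -> X -> Prop) (phi : R -> X -> X)
  (L N : X -> Prop) :
  partial_flow X G phi ->
  isolated X G phi L ->
  isolating_neighborhood X G phi L N ->
  exists U : X -> Prop,
    is_open X U /\ phi_convex X G phi U /\
    (forall x, L x -> U x) /\ (forall x, U x -> N x).
Proof.
  intros pf [Linv _] Hiso.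
  destruct (key X G phi L N pf Hiso) as [m Hm].
  pose proof (pos_INR m) as hm.
  destruct Hiso as [HK [Hnb Hi]].
  exists (UT X G phi N (INR m)). split; [|split; [|split]].
  - apply UT_open; auto.
  - apply UT_convex; auto.
  - intros x Lx r hr. 
    assert (Gall : forall t, G t x).
    { apply (full_dom X G phi N pf HK). intros t Gt. apply Wint_sub. apply Hnb. apply Linv; auto. }
    split; auto. apply Hnb. apply Linv; auto.
  - intros x Ux. destruct (Ux 0 ltac:(lra)) as [_ W].
    rewrite (pf_id _ _ _ pf) in W. apply Wint_sub; exact W.
Qed.
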